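(* Consider the problem, algorithm and notation described in the context, with each $f_i$ convex and $l$-smooth, and DCGS run with parameters $\theta_k=\alpha_k=1$, $\eta_k=2\|L\|$, $\tau_k=\|L\|$, $e_i^k=\frac{\|L\|\max(\|\mathbf{x}^0-\mathbf{x}^*\|^2,\|\mathbf{y}^0\|^2)}{mN}$. Then to obtain an output with $F(\overline{\mathbf{x}}_N)-F(\mathbf{x}^* )\le\epsilon$, the number of communication rounds and the number of LO calls performed by each agent are respectively bounded by $$\mathcal{O}\left(\frac{\|L\|\max(\|\mathbf{x}^0-\mathbf{x}^*\|^2,\|\mathbf{y}^0\|^2)}{\epsilon}\right)\quad\text{and}\quad \mathcal{O}\left(\frac{m\|L\|(l+\|L\|)\max(\|\mathbf{x}^0-\mathbf{x}^*\|^2,\|\mathbf{y}^0\|^2)}{\epsilon^2}\right).$$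
   Context: Let $G=(V,E)$ be a connected undirected graph with $V=\{1,\dots,m\}$ and $N(i)=\{j:(i,j)\in E\}$. Its Laplacian $L\in\mathbb{R}^{m\times m}$ has $L_{ii}=|N(i)|$, $L_{ij}=-1$ if $i\ne j$ and $(i,j)\in E$, and $L_{ij}=0$ otherwise; $\|L\|$ is its spectral norm. Agent $i$ holds $f_i:\mathbb{R}^d\to\mathbb{R}$; each $f_i$ is $u$-strongly convex ($u\ge 0$) and $l$-smooth, i.e. $\frac{u}{2}\|y-x\|^2\le f_i(y)-f_i(x)-\nabla f_i(x)^T(y-x)\le\frac{l}{2}\|y-x\|^2$. $X\subset\mathbb{R}^d$ is a nonempty compact convex set accessed through a linear oracle (LO) returning $\arg\min_{s\in X}\langle g,s\rangle$. For $\mathbf{x}=(x_1,\dots,x_m)\in X^m$ let $F(\mathbf{x})=\sum_{i=1}^m f_i(x_i)$, and let $\mathbf{x}^*$ be an optimal solution of $\min_{\mathbf{x}\in X^m}F(\mathbf{x})$ subject to $(L\otimes I_d)\mathbf{x}=0$. All norms on $\mathbb{R}^{md}$ are Euclidean. Procedure $CG(f,x,w,\eta,e)$ (Frank–Wolfe on $\phi(z)=\langle w,z\rangle+f(z)+\frac{\eta}{2}\|z-x\|^2$ over $X$): pick $z^0\in X$; for $t=0,1,\dots$: let $g^t=\nabla f(z^t)+w+\eta(z^t-x)$ and $s^t=\arg\min_{s\in X}\langle g^t,s\rangle$ (one LO call); if $\langle g^t,z^t-s^t\rangle\le e$ return $z^t$; otherwise $z^{t+1}=(1-\gamma_t)z^t+\gamma_t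 s^t$ with $\gamma_t=\frac{2}{t+2}$ or chosen by line search. Algorithm DCGS: given $N$, $\mathbf{x}^0=\mathbf{x}^{-1}\in X^m$, $\mathbf{y}^0\in\mathbb{R}^{md}$ and parameters $\{\alpha_k\},\{\tau_k\},\{\eta_k\},\{\theta_k\},\{e_i^k\}$. For $k=1,\dots,N$, every agent $i$ computes: $\tilde x_i^k=\alpha_k(x_i^{k-1}-x_i^{k-2})+x_i^{k-1}$ and broadcasts it to its neighbors; $v_i^k=\sum_{j\in N(i)\cup\{i\}}L_{ij}\tilde x_j^k$; $y_i^k=y_i^{k-1}+\frac{1}{\tau_k}v_i^k$ and broadcasts it to its neighbors; $w_i^k=\sum_{j\in N(i)\cup\{i\}}L_{ij}y_j^k$; $x_i^k=CG(f_i,x_i^{k-1},w_i^k,\eta_k,e_i^k)$. Thus each outer iteration uses a constant number (two) of communication rounds. Output $\overline{\mathbf{x}}_N=(\sum_{k=1}^N\theta_k)^{-1}\sum_{k=1}^N\theta_k\mathbf{x}^k$. *)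

(* Defs.v *)
(* R : realType, vectors of R^d are
   row vectors 'rV[R]_d, stacked vectors of R^{md} are m x d matrices whose
   i-th row is the block x_i. *)
From mathcomp Require Import all_boot all_order all_algebra.
From mathcomp Require Import all_classical all_reals all_analysis.
Import Order.TTheory GRing.Theory Num.Theory.

Set Implicit Arguments.
Unset Strict Implicit.
Unset Printing Implicit Defensive.

Local Open Scope ring_scope.
Local Open Scope classical_set_scope.

Section Defs.
Variable R : realType.

Definition dotv {d : nat} (u v : 'rV[R]_d) : R := \sum_(j < d) u ord0 j * v ord0 j.

Definition sqnorm {p q : nat} (M : 'M[R]_(p, q)) : R :=
  \sum_(i < p) \sum_(j < q) M i j ^+ 2.

Definition enorm {p q : nat} (M : 'M[R]_(p, q)) : R := Num.sqrt (sqnorm M).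

Definition specnorm {m : nat} (A : 'M[R]_m) : R :=
  sup [set enorm (A *m v) | v in [set v : 'cV[R]_m | enorm v = 1]].

Definition laplacian {m : nat} (E : rel 'I_m) : 'M[R]_m :=
  \matrix_(i, j) (if i == j then (#|[set k | E i k]|)%:R
                  else if E i j then -1 else 0).

Definition connected_graph {m : nat} (E : rel 'I_m) : Prop :=
  (forall i, ~~ E i i) /\ (forall i j, E i j = E j i) /\
  (forall i j, connect E i j).

Definition compact_set {d : nat} (X : set 'rV[R]_d) : Prop :=
  compact (X : set 'rV[R^o]_d).

Definition strcvx_smooth {d : nat} (u l : R) (f : 'rV[R]_d -> R)
  (g : 'rV[R]_d -> 'rV[R]_d) : Prop :=
  forall x y, u / 2 * sqnorm (y - x) <= f y - f x - dotv (g x) (y - x)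
              <= l / 2 * sqnorm (y - x).

Definition linear_oracle {d : nat} (X : set 'rV[R]_d)
  (lo : 'rV[R]_d -> 'rV[R]_d) : Prop :=
  forall g, X (lo g) /\ forall s, X s -> dotv g (lo g) <= dotv g s.

Definition inXm {m d : nat} (X : set 'rV[R]_d) (x : 'M[R]_(m, d)) : Prop :=
  forall i, X (row i x).

Definition Fobj {m d : nat} (f : 'I_m -> 'rV[R]_d -> R) (x : 'M[R]_(m, d)) : R :=
  \sum_(i < m) f i (row i x).

(* x* optimal for min_{x in X^m} F(x) s.t. (L (x) I_d) x = 0 *)
Definition optimal_sol {m d : nat} (X : set 'rV[R]_d) (L : 'M[R]_m)
  (f : 'I_m -> 'rV[R]_d -> R) (xs : 'M[R]_(m, d)) : Prop :=
  inXm X xs /\ L *m xs = 0 /\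
  forall x, inXm X x -> L *m x = 0 -> Fobj f xs <= Fobj f x.

Definition cg_phi {d : nat} (f : 'rV[R]_d -> R) (x w : 'rV[R]_d) (eta : R)
  (z : 'rV[R]_d) : R :=
  dotv w z + f z + eta / 2 * sqnorm (z - x).

Definition cg_grad {d : nat} (gf : 'rV[R]_d -> 'rV[R]_d) (x w : 'rV[R]_d) (eta : R)
  (z : 'rV[R]_d) : 'rV[R]_d :=
  gf z + w + eta *: (z - x).

(* A step-size rule: given the agent i, eta, the centre x, the linear term w,
   the iteration counter t, the current iterate z and the LO answer s, it
   returns gamma_t. *)
Definition step_rule (m d : nat) :=
  'I_m -> R -> 'rV[R]_d -> 'rV[R]_d -> nat -> 'rV[R]_d -> 'rV[R]_d -> R.

Definition admissible_step {m d : nat} (f : 'I_m -> 'rV[R]_d -> R)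
  (gam : step_rule m d) : Prop :=
  (forall i eta x w t z s, gam i eta x w t z s = 2 / (t%:R + 2)) \/
  (forall i eta x w t z s,
     0 <= gam i eta x w t z s <= 1 /\
     forall c : R, 0 <= c <= 1 ->
       cg_phi (f i) x w eta ((1 - gam i eta x w t z s) *: z + gam i eta x w t z s *: s)
       <= cg_phi (f i) x w eta ((1 - c) *: z + c *: s)).

Fixpoint cg_seq {m d : nat} (i : 'I_m) (gf : 'rV[R]_d -> 'rV[R]_d)
  (lo : 'rV[R]_d -> 'rV[R]_d) (gam : step_rule m d)
  (x w : 'rV[R]_d) (eta : R) (z0 : 'rV[R]_d) (t : nat) : 'rV[R]_d :=
  match t with
  | 0 => z0
  | t'.+1 =>
      let z := cg_seq i gf lo gam x w eta z0 t' in
      let s := lo (cg_grad gf x w eta z) in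
      let c := gam i eta x w t' z s in
      (1 - c) *: z + c *: s
  end.

Definition cg_gap {m d : nat} (i : 'I_m) (gf : 'rV[R]_d -> 'rV[R]_d)
  (lo : 'rV[R]_d -> 'rV[R]_d) (gam : step_rule m d)
  (x w : 'rV[R]_d) (eta : R) (z0 : 'rV[R]_d) (t : nat) : R :=
  let z := cg_seq i gf lo gam x w eta z0 t in
  let g := cg_grad gf x w eta z in
  dotv g (z - lo g).

(* CG(f_i, x, w, eta, e) started at z0 stops at iteration T (i.e. returns z^T
   after exactly T+1 LO calls) *)
Definition cg_stops_at {m d : nat} (i : 'I_m) (gf : 'rV[R]_d -> 'rV[R]_d)
  (lo : 'rV[R]_d -> 'rV[R]_d) (gam : step_rule m d)
  (x w : 'rV[R]_d) (eta e : R) (z0 : 'rV[R]_d) (T : nat) : Prop :=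
  cg_gap i gf lo gam x w eta z0 T <= e /\
  forall t, (t < T)%N -> e < cg_gap i gf lo gam x w eta z0 t.

(* A run of DCGS for N outer iterations: xs k = x^k, ys k = y^k, T k i = index
   at which the k-th CG call of agent i stops (it uses T k i + 1 LO calls).
   x^{-1} = x^0 is encoded by truncated subtraction (k-2 = 0 for k = 1).
   zinit k i is the starting point z^0 picked in the k-th CG call of agent i. *)
Definition dcgs_run {m d : nat} (L : 'M[R]_m) (gf : 'I_m -> 'rV[R]_d -> 'rV[R]_d)
  (lo : 'rV[R]_d -> 'rV[R]_d) (gam : step_rule m d)
  (zinit : nat -> 'I_m -> 'rV[R]_d)
  (alpha tau eta : nat -> R) (e : nat -> 'I_m -> R)
  (N : nat) (x0 y0 : 'M[R]_(m, d))
  (xs ys : nat -> 'M[R]_(m, d)) (T : nat -> 'I_m -> nat) : Prop :=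
  xs 0%N = x0 /\ ys 0%N = y0 /\
  forall k, (1 <= k <= N)%N ->
    let xt := alpha k *: (xs (k - 1)%N - xs (k - 2)%N) + xs (k - 1)%N in
    let v := L *m xt in
    ys k = ys (k - 1)%N + (tau k)^-1 *: v /\
    let w := L *m ys k in
    forall i : 'I_m,
      cg_stops_at i (gf i) lo gam (row i (xs (k - 1)%N)) (row i w) (eta k) (e k i)
        (zinit k i) (T k i) /\
      row i (xs k) =
        cg_seq i (gf i) lo gam (row i (xs (k - 1)%N)) (row i w) (eta k) (zinit k i) (T k i).

Definition dcgs_output {m d : nat} (theta : nat -> R) (N : nat)
  (xs : nat -> 'M[R]_(m, d)) : 'M[R]_(m, d) :=
  (\sum_(1 <= k < N.+1) theta k)^-1 *: \sum_(1 <= k < N.+1) theta k *: xs k.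

Definition lo_calls {m : nat} (T : nat -> 'I_m -> nat) (N : nat) (i : 'I_m) : nat :=
  \sum_(1 <= k < N.+1) (T k i).+1.

End Defs.

(* Main.v *)
Require Import Defs.
From mathcomp Require Import all_boot all_order all_algebra.
From mathcomp Require Import all_classical all_reals all_analysis.
From mathcomp Require Import ring lra zify.
Import Order.TTheory GRing.Theory Num.Theory.
Local Open Scope ring_scope.
Local Open Scope classical_set_scope.
Set Implicit Arguments.
Unset Strict Implicit.
Unset Printing Implicit Defensive.
Section Basic.
Variable R : realType.

Definition ip {p q : nat} (A B : 'M[R]_(p, q)) : R := \sum_i \sum_j A i j * B i j.

Lemma ipC {p q : nat} (A B : 'M[R]_(p,q)) : ip A B = ip B A.
Proof. by apply: eq_bigr => i _; apply: eq_bigr => j _; rewrite mulrC. Qed.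

Lemma ipDl {p q : nat} (A B C : 'M[R]_(p,q)) : ip (A + B) C = ip A C + ip B C.
Proof.
rewrite /ip -big_split /=; apply: eq_bigr => i _.
rewrite -big_split /=; apply: eq_bigr => j _; by rewrite !mxE mulrDl.
Qed.

Lemma ipZl {p q : nat} c (A B : 'M[R]_(p,q)) : ip (c *: A) B = c * ip A B.
Proof.
rewrite /ip mulr_sumr; apply: eq_bigr => i _.
rewrite mulr_sumr; apply: eq_bigr => j _; by rewrite !mxE mulrA.
Qed.

Lemma ipNl {p q : nat} (A B : 'M[R]_(p,q)) : ip (- A) B = - ip A B.
Proof. by rewrite -scaleN1r ipZl mulN1r. Qed.

Lemma ipBl {p q : nat} (A B C : 'M[R]_(p,q)) : ip (A - B) C = ip A C - ip B C.
Proof. by rewrite ipDl ipNl. Qed.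

Lemma ipDr {p q : nat} (A B C : 'M[R]_(p,q)) : ip C (A + B) = ip C A + ip C B.
Proof. by rewrite ipC ipDl !(ipC C). Qed.
Lemma ipZr {p q : nat} c (A B : 'M[R]_(p,q)) : ip B (c *: A) = c * ip B A.
Proof. by rewrite ipC ipZl ipC. Qed.
Lemma ipNr {p q : nat} (A B : 'M[R]_(p,q)) : ip B (- A) = - ip B A.
Proof. by rewrite ipC ipNl ipC. Qed.
Lemma ipBr {p q : nat} (A B C : 'M[R]_(p,q)) : ip C (A - B) = ip C A - ip C B.
Proof. by rewrite ipDr ipNr. Qed.
Lemma ip0r {p q : nat} (A : 'M[R]_(p,q)) : ip A 0 = 0.
Proof. by rewrite /ip big1 // => i _; rewrite big1 // => j _; rewrite mxE mulr0. Qed.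
Lemma ip0l {p q : nat} (A : 'M[R]_(p,q)) : ip 0 A = 0.
Proof. by rewrite ipC ip0r. Qed.

Lemma sqnormE {p q : nat} (A : 'M[R]_(p,q)) : sqnorm A = ip A A.
Proof. by apply: eq_bigr => i _; apply: eq_bigr => j _; rewrite expr2. Qed.

Lemma sqnorm_ge0 {p q : nat} (A : 'M[R]_(p,q)) : 0 <= sqnorm A.
Proof. by apply: sumr_ge0 => i _; apply: sumr_ge0 => j _; apply: sqr_ge0. Qed.

Lemma sqnormD {p q : nat} (A B : 'M[R]_(p,q)) :
  sqnorm (A + B) = sqnorm A + 2 * ip A B + sqnorm B.
Proof. rewrite !sqnormE ipDl !ipDr (ipC B A); ring. Qed.

Lemma sqnormB {p q : nat} (A B : 'M[R]_(p,q)) :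
  sqnorm (A - B) = sqnorm A - 2 * ip A B + sqnorm B.
Proof. rewrite !sqnormE ipBl !ipBr (ipC B A); ring. Qed.

Lemma sqnormN {p q : nat} (A : 'M[R]_(p,q)) : sqnorm (- A) = sqnorm A.
Proof. by rewrite !sqnormE ipNl ipNr opprK. Qed.

Lemma sqnormZ {p q : nat} c (A : 'M[R]_(p,q)) : sqnorm (c *: A) = c ^+ 2 * sqnorm A.
Proof. by rewrite !sqnormE ipZl ipZr mulrA expr2. Qed.

Lemma sqnorm_sym {p q : nat} (A B : 'M[R]_(p,q)) : sqnorm (A - B) = sqnorm (B - A).
Proof. by rewrite -sqnormN opprB. Qed.

Lemma ip_young {p q : nat} (c : R) (A B : 'M[R]_(p,q)) : 0 < c ->
  2 * ip A B <= c * sqnorm A + c^-1 * sqnorm B.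
Proof.
move=> c0.
have h := sqnorm_ge0 (c *: A - B).
rewrite sqnormB sqnormZ ipZl in h.
have hc : c * c^-1 = 1 by rewrite mulfV // gt_eqF.
have : c * (2 * ip A B) <= c * (c * sqnorm A + c^-1 * sqnorm B).
  rewrite mulrDr [c * (c^-1 * _)]mulrA hc mul1r mulrA; lra.
by rewrite ler_pM2l.
Qed.

Lemma dotvE {d : nat} (u v : 'rV[R]_d) : dotv u v = ip u v.
Proof. by rewrite /ip /dotv big_ord1. Qed.

Lemma ip_rows {p q : nat} (A B : 'M[R]_(p,q)) : ip A B = \sum_i ip (row i A) (row i B).
Proof. apply: eq_bigr => i _; rewrite /ip big_ord1; apply: eq_bigr => j _; by rewrite !mxE. Qed.

Lemma sqnorm_rows {p q : nat} (A : 'M[R]_(p,q)) : sqnorm A = \sum_i sqnorm (row i A).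
Proof. by rewrite sqnormE ip_rows; apply: eq_bigr => i _; rewrite sqnormE. Qed.

Lemma sqnorm_cols {p q : nat} (A : 'M[R]_(p,q)) : sqnorm A = \sum_j sqnorm (col j A).
Proof.
rewrite /sqnorm; under [RHS]eq_bigr do under eq_bigr do rewrite big_ord1 mxE.
by rewrite exchange_big.
Qed.

Lemma ip_mulmx {p q : nat} (L : 'M[R]_p) (A B : 'M[R]_(p,q)) : L^T = L ->
  ip (L *m A) B = ip A (L *m B).
Proof.
move=> HL; rewrite /ip.
under eq_bigr do under eq_bigr do rewrite mxE big_distrl.
under [RHS]eq_bigr do under eq_bigr do rewrite mxE big_distrr.
rewrite /=.
under eq_bigr do rewrite exchange_big.
under [RHS]eq_bigr do rewrite exchange_big.
rewrite exchange_big /=.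
apply: eq_bigr => j _; apply: eq_bigr => i _; apply: eq_bigr => k _.
have -> : L i j = L j i by rewrite -{1}HL mxE.
ring.
Qed.

Lemma ip_sumr {p q : nat} (A : 'M[R]_(p,q)) (I : Type) (r : seq I) (P : pred I) (F : I -> 'M[R]_(p,q)) :
  ip A (\sum_(i <- r | P i) F i) = \sum_(i <- r | P i) ip A (F i).
Proof.
by apply: (big_morph (ip A)); [move=> x y; rewrite ipDr | rewrite ip0r].
Qed.

End Basic.
Unset Implicit Arguments.
Section FW.
Variables (R : realType) (m d : nat) (X : set 'rV[R]_d)
  (f : 'I_m -> 'rV[R]_d -> R) (gf : 'I_m -> 'rV[R]_d -> 'rV[R]_d) (l : R)
  (lo : 'rV[R]_d -> 'rV[R]_d) (gam : step_rule R m d).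
Hypothesis Hf : forall i, strcvx_smooth 0 l (f i) (gf i).
Hypothesis Hlo : linear_oracle X lo.

Lemma conv_eq (z s : 'rV[R]_d) c : (1 - c) *: z + c *: s = z + c *: (s - z).
Proof. by rewrite scalerBl scale1r scalerBr addrAC addrA. Qed.
Lemma conv_sub (z s : 'rV[R]_d) c : (1 - c) *: z + c *: s - z = c *: (s - z).
Proof. by rewrite conv_eq addrAC subrr add0r. Qed.

Lemma f_cvx i (z y : 'rV[R]_d) : f i z + ip (gf i z) (y - z) <= f i y.
Proof.
have /andP [h _] := Hf i z y.
rewrite mul0r -dotvE in h *; lra.
Qed.

Lemma f_smooth i (z y : 'rV[R]_d) : f i y <= f i z + ip (gf i z) (y - z) + l / 2 * sqnorm (y - z).
Proof.
have /andP [_ h] := Hf i z y.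
rewrite -dotvE; lra.
Qed.

Lemma grad_ip i x w eta (z v : 'rV[R]_d) :
  ip (cg_grad (gf i) x w eta z) v = ip (gf i z) v + ip w v + eta * ip (z - x) v.
Proof. by rewrite /cg_grad ipDl ipDl ipZl. Qed.

Lemma descent i x w eta (z s : 'rV[R]_d) c :
  cg_phi (f i) x w eta ((1 - c) *: z + c *: s) <=
  cg_phi (f i) x w eta z + c * ip (cg_grad (gf i) x w eta z) (s - z)
   + (l + eta) / 2 * (c ^+ 2 * sqnorm (s - z)).
Proof.
rewrite /cg_phi !dotvE grad_ip.
have hs := f_smooth i z ((1 - c) *: z + c *: s).
rewrite conv_sub ipZr sqnormZ in hs.
have -> : (1 - c) *: z + c *: s - x = (z - x) + c *: (s - z).
  by rewrite conv_eq addrAC.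
rewrite sqnormD ipZr sqnormZ conv_eq ipDr ipZr.
rewrite conv_eq in hs.
lra.
Qed.

Lemma phi_cvx i x w (eta : R) (z y : 'rV[R]_d) : 0 <= eta ->
  cg_phi (f i) x w eta z + ip (cg_grad (gf i) x w eta z) (y - z) <= cg_phi (f i) x w eta y.
Proof.
move=> he.
rewrite /cg_phi !dotvE grad_ip.
have hc := f_cvx i z y.
have -> : y - x = (z - x) + (y - z) by rewrite [RHS]addrC addrA subrK.
rewrite [sqnorm (z - x + _)]sqnormD.
have h1 : 0 <= eta / 2 * sqnorm (y - z) by apply: mulr_ge0; [lra|apply: sqnorm_ge0].
have -> : ip w y = ip w z + ip w (y - z) by rewrite ipBr; ring.
lra.
Qed.

Definition gapf i x w eta (z : 'rV[R]_d) :=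
  let g := cg_grad (gf i) x w eta z in ip g (z - lo g).

Lemma gap_ge i x w eta (z y : 'rV[R]_d) : 0 <= eta -> X y ->
  cg_phi (f i) x w eta z - cg_phi (f i) x w eta y <= gapf i x w eta z.
Proof.
move=> he Xy; rewrite /gapf.
have [_ hl] := Hlo (cg_grad (gf i) x w eta z).
have := hl y Xy; rewrite !dotvE => hl'.
have := phi_cvx i x w eta z y he.
rewrite !ipBr; lra.
Qed.

Lemma cg_gapE i x w eta z0 t :
  cg_gap i (gf i) lo gam x w eta z0 t = gapf i x w eta (cg_seq i (gf i) lo gam x w eta z0 t).
Proof. by rewrite /cg_gap /gapf dotvE. Qed.

Hypothesis HX : convex_set X.
Hypothesis Hgam : admissible_step f gam.
Variable Dl : R.
Hypothesis HDl : forall a b, X a -> X b -> sqnorm (a - b) <= Dl.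

Lemma cvxX (c : R) (a b : 'rV[R]_d) : 0 <= c -> c <= 1 -> X a -> X b ->
  X ((1 - c) *: a + c *: b).
Proof.
move=> h0 h1 Ha Hb.
have := @HX b a (Itv01 h0 h1) (mem_set Hb) (mem_set Ha).
by rewrite inE /= /conv /= addrC.
Qed.

Lemma gamt_ge0 (t : nat) : 0 <= 2 / (t%:R + 2 : R).
Proof. by apply: divr_ge0 => //; apply: addr_ge0. Qed.

Lemma gamt_le1 (t : nat) : 2 / (t%:R + 2 : R) <= 1.
Proof.
have h : 0 < (t%:R + 2 : R) by apply: ltr_wpDl.
by rewrite ler_pdivrMr // mul1r lerDr.
Qed.

Lemma gam_range i eta x w t z s : 0 <= gam i eta x w t z s <= 1.
Proof.
case: Hgam => [h|h]; last by case: (h i eta x w t z s).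
by rewrite h gamt_ge0 gamt_le1.
Qed.

Lemma seq_in i x w eta z0 t : X z0 -> X (cg_seq i (gf i) lo gam x w eta z0 t).
Proof.
move=> Hz0; elim: t => [|t IH] //=.
have /andP [h0 h1] := gam_range i eta x w t (cg_seq i (gf i) lo gam x w eta z0 t)
   (lo (cg_grad (gf i) x w eta (cg_seq i (gf i) lo gam x w eta z0 t))).
apply: cvxX => //.
by have [] := Hlo (cg_grad (gf i) x w eta (cg_seq i (gf i) lo gam x w eta z0 t)).
Qed.

Lemma step_desc i x w (eta : R) z0 t : 0 <= eta -> 0 <= l + eta -> X z0 ->
  cg_phi (f i) x w eta (cg_seq i (gf i) lo gam x w eta z0 t.+1) <=
  cg_phi (f i) x w eta (cg_seq i (gf i) lo gam x w eta z0 t)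
  - 2 / (t%:R + 2) * gapf i x w eta (cg_seq i (gf i) lo gam x w eta z0 t)
  + (2 / (t%:R + 2)) ^+ 2 * ((l + eta) / 2 * Dl).
Proof.
move=> he hle Hz0.
set z := cg_seq i (gf i) lo gam x w eta z0 t.
set g := cg_grad (gf i) x w eta z.
set s := lo g.
set ga := 2 / (t%:R + 2 : R).
have Xz : X z by apply: seq_in.
have Xs : X s by have [] := Hlo g.
have main : cg_phi (f i) x w eta ((1 - ga) *: z + ga *: s) <=
  cg_phi (f i) x w eta z - ga * gapf i x w eta z + ga ^+ 2 * ((l + eta) / 2 * Dl).
  apply: (le_trans (descent i x w eta z s ga)).
  have e1 : ip (cg_grad (gf i) x w eta z) (s - z) = - gapf i x w eta z.
    by rewrite /gapf -/g -/s !ipBr opprB.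
  rewrite e1.
  have : (l + eta) / 2 * (ga ^+ 2 * sqnorm (s - z)) <= ga ^+ 2 * ((l + eta) / 2 * Dl).
    rewrite mulrCA; apply: ler_wpM2l; first by apply: sqr_ge0.
    apply: ler_wpM2l; first by lra.
    by apply: HDl.
  lra.
rewrite /=; rewrite -/z -/g -/s.
case: Hgam => [h|h].
  by rewrite h -/ga.
have [_ h2] := h i eta x w t z s.
apply: le_trans (h2 ga _) main.
by rewrite gamt_ge0 gamt_le1.
Qed.

Lemma arith1 (u C : R) : 0 <= u -> 0 <= C ->
  (1 - 2 / (u + 2)) * (4 * C / (u + 2)) + (2 / (u + 2)) ^+ 2 * C <= 4 * C / (u + 3).
Proof.
move=> hu hC.
have h2 : u + 2 != 0 by rewrite gt_eqF //; lra.
have h3 : u + 3 != 0 by rewrite gt_eqF //; lra.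
have -> : (1 - 2 / (u + 2)) * (4 * C / (u + 2)) + (2 / (u + 2)) ^+ 2 * C =
   4 * C / (u + 3) - 4 * C / ((u + 2) ^+ 2 * (u + 3)).
  by field; rewrite h2 h3.
have : 0 <= 4 * C / ((u + 2) ^+ 2 * (u + 3)).
  apply: divr_ge0; first lra.
  apply: mulr_ge0; [apply: sqr_ge0|lra].
lra.
Qed.

Lemma H_bound i x w (eta : R) z0 y t : 0 <= eta -> 0 <= l + eta -> X z0 -> X y -> 0 <= Dl ->
  cg_phi (f i) x w eta (cg_seq i (gf i) lo gam x w eta z0 t.+1) - cg_phi (f i) x w eta y
  <= 4 * ((l + eta) / 2 * Dl) / (t.+1%:R + 2).
Proof.
move=> he hle Hz0 Xy HD.
set C := (l + eta) / 2 * Dl.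
have hC : 0 <= C by apply: mulr_ge0 => //; lra.
elim: t => [|t IH].
  have h := step_desc i x w eta z0 0 he hle Hz0.
  have hg := gap_ge i x w eta (cg_seq i (gf i) lo gam x w eta z0 0) y he Xy.
  rewrite add0r divff ?expr1n ?mul1r ?mulr1 // in h.
  have : C <= 4 * C / (1%:R + 2).
    rewrite ler_pdivlMr; last by lra.
    lra.
  move=> hh; rewrite -/C in h; lra.
have h := step_desc i x w eta z0 t.+1 he hle Hz0.
have hg := gap_ge i x w eta (cg_seq i (gf i) lo gam x w eta z0 t.+1) y he Xy.
set u := (t.+1%:R : R) in IH h.
have hu : 0 <= u by [].
have -> : (t.+2%:R : R) = u + 1 by rewrite /u -natr1.
have -> : u + 1 + 2 = u + 3 by ring.
set ga := 2 / (u + 2) in h.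
have hga : 0 <= ga by apply: divr_ge0 => //; lra.
have hga1 : 0 <= 1 - ga.
  rewrite subr_ge0 /ga ler_pdivrMr; last by lra.
  lra.
set h1 := cg_phi (f i) x w eta (cg_seq i (gf i) lo gam x w eta z0 t.+1) - cg_phi (f i) x w eta y in IH hg.
have k1 : ga * h1 <= ga * gapf i x w eta (cg_seq i (gf i) lo gam x w eta z0 t.+1).
  by apply: ler_wpM2l.
have k2 : (1 - ga) * h1 <= (1 - ga) * (4 * C / (u + 2)) by apply: ler_wpM2l.
have k3 := arith1 u C hu hC.
rewrite -/ga in k3.
rewrite -/C in h; rewrite /h1 in k1 k2.
lra.
Qed.

Lemma arith2 (A C e : R) : 1 <= A -> 0 <= C -> 0 < e ->
  A * (e / (A + 1) - 4 * C / (A + 2) ^+ 2) <= 4 * C / (A + 2) -> (A + 2) * e <= 16 * C.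
Proof.
move=> hA hC he H.
have h1 : A + 1 != 0 by rewrite gt_eqF //; lra.
have h2 : A + 2 != 0 by rewrite gt_eqF //; lra.
have E : A * (e / (A + 1) - 4 * C / (A + 2) ^+ 2) - 4 * C / (A + 2) =
  (A * e * (A + 2) ^+ 2 - 4 * A * C * (A + 1) - 4 * C * (A + 1) * (A + 2))
   / ((A + 1) * (A + 2) ^+ 2).
  by field; rewrite h1 h2.
have hpos : 0 < (A + 1) * (A + 2) ^+ 2.
  apply: mulr_gt0; first lra.
  by apply: exprn_gt0; lra.
have H' : A * e * (A + 2) ^+ 2 - 4 * A * C * (A + 1) - 4 * C * (A + 1) * (A + 2) <= 0.
  have : (A * e * (A + 2) ^+ 2 - 4 * A * C * (A + 1) - 4 * C * (A + 1) * (A + 2))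
   / ((A + 1) * (A + 2) ^+ 2) <= 0 by rewrite -E; lra.
  by rewrite pmulr_lle0 // invr_gt0.
have k1 : 0 < A * (A + 2) by apply: mulr_gt0; lra.
have k2 : 0 <= C * (A ^+ 2 + 2 * A - 1) by apply: mulr_ge0 => //; nra.
rewrite expr2 in H'. rewrite expr2 in k2.
nra.
Qed.

Lemma fw_exists i x w (eta : R) z0 (a : nat) (e : R) :
  0 <= eta -> 0 <= l + eta -> X z0 -> 0 <= Dl -> (1 <= a)%N -> 0 < e ->
  16 * ((l + eta) / 2 * Dl) < (a%:R + 2) * e ->
  exists t, (t < 2 * a)%N /\ gapf i x w eta (cg_seq i (gf i) lo gam x w eta z0 t) <= e.
Proof.
move=> he hle Hz0 HD ha e0 Hae.
set C := (l + eta) / 2 * Dl in Hae.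
have hC : 0 <= C by apply: mulr_ge0 => //; lra.
case: (pselect (exists t, (t < 2 * a)%N /\
   gapf i x w eta (cg_seq i (gf i) lo gam x w eta z0 t) <= e)) => // Hn.
exfalso.
have Hgt : forall t, (t < 2 * a)%N -> e < gapf i x w eta (cg_seq i (gf i) lo gam x w eta z0 t).
  move=> t ht; rewrite ltNge; apply/negP => hle'; apply: Hn; by exists t.
set A := (a%:R : R).
have hA : 1 <= A by rewrite /A ler1n.
set phi := cg_phi (f i) x w eta.
set z := cg_seq i (gf i) lo gam x w eta z0.
set delta := e / (A + 1) - 4 * C / (A + 2) ^+ 2.
have step : forall t, (a <= t)%N -> (t < 2 * a)%N -> phi (z t.+1) <= phi (z t) - delta.
  move=> t h1 h2.
  have hd := step_desc i x w eta z0 t he hle Hz0.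
  rewrite -/C -/phi -/z in hd.
  have hg := Hgt t h2.
  set ga := 2 / (t%:R + 2) in hd.
  have tA1 : (t%:R : R) <= A * 2.
    have : (t <= a * 2)%N by rewrite mulnC; apply: ltnW.
    by rewrite -(ler_nat R) natrM.
  have tA2 : A <= (t%:R : R) by rewrite ler_nat.
  have ht0 : 0 < (t%:R + 2 : R) by apply: ltr_wpDl.
  have g1 : 1 / (A + 1) <= ga.
    rewrite /ga ler_pdivrMr; last by lra.
    rewrite mulrC mulrA ler_pdivlMr; last by lra.
    lra.
  have g2 : ga <= 2 / (A + 2).
    rewrite /ga ler_pdivrMr // mulrC mulrA ler_pdivlMr; last by lra.
    lra.
  have g0 : 0 <= ga by apply: divr_ge0 => //; lra.
  have k1 : e / (A + 1) <= ga * gapf i x w eta (z t).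
    have -> : e / (A + 1) = 1 / (A + 1) * e by rewrite mul1r mulrC.
    apply: le_trans (_ : ga * e <= _).
      by apply: ler_wpM2r; [lra|].
    by apply: ler_wpM2l; [|lra].
  have k2 : ga ^+ 2 * C <= 4 * C / (A + 2) ^+ 2.
    have -> : 4 * C / (A + 2) ^+ 2 = (2 / (A + 2)) ^+ 2 * C.
      have hA2 : A + 2 != 0 by rewrite gt_eqF //; lra.
      by field.
    apply: ler_wpM2r => //.
    by rewrite !expr2; apply: ler_pM.
  rewrite /delta; lra.
have ind : forall j, (j <= a)%N -> phi (z (a + j)%N) <= phi (z a) - j%:R * delta.
  elim=> [|j IHj] hj; first by rewrite addn0 mul0r subr0.
  have hs := step (a + j)%N (leq_addr j a) ltac:(lia).
  rewrite addnS.
  have := IHj (ltnW hj).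
  rewrite -natr1.
  lra.
have hb := ind a (leqnn a).
have Xza2 : X (z (a + a)%N) by apply: seq_in.
have hH := H_bound i x w eta z0 (z (a + a)%N) a.-1 he hle Hz0 Xza2 HD.
rewrite prednK // -/C -/phi -/z -/A in hH.
have hfin : A * delta <= 4 * C / (A + 2) by lra.
have := arith2 A C e hA hC e0 hfin.
lra.
Qed.

End FW.
Set Implicit Arguments.
Lemma cg_T_bound (R : realType) (m d : nat) (X : set 'rV[R]_d)
  (f : 'I_m -> 'rV[R]_d -> R) (gf : 'I_m -> 'rV[R]_d -> 'rV[R]_d) (l : R)
  (lo : 'rV[R]_d -> 'rV[R]_d) (gam : step_rule R m d)
  (Hf : forall i, strcvx_smooth 0 l (f i) (gf i))
  (Hlo : linear_oracle X lo) (HX : convex_set X) (Hgam : admissible_step f gam)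
  (Dl : R) (HDl : forall a b, X a -> X b -> sqnorm (a - b) <= Dl)
  i x w (eta e : R) z0 :
  0 <= eta -> 0 <= l + eta -> X z0 -> 0 <= Dl -> 0 < e ->
  (exists T, cg_gap i (gf i) lo gam x w eta z0 T <= e) /\
  (forall T, cg_stops_at i (gf i) lo gam x w eta e z0 T ->
     (T.+1)%:R <= 32 * ((l + eta) / 2 * Dl) / e + 2).
Proof.
move=> he hle Hz0 HD e0.
set C := (l + eta) / 2 * Dl.
have hC : 0 <= C by apply: mulr_ge0 => //; lra.
set a := (Num.trunc (16 * C / e)).+1.
have hx : 0 <= 16 * C / e by apply: divr_ge0; lra.
have ha1 : (a%:R : R) <= 16 * C / e + 1.
  rewrite /a -natr1; have := truncn_le (16 * C / e); rewrite hx => h; lra.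
have ha2 : 16 * C < (a%:R + 2) * e.
  have := truncnS_gt (16 * C / e); rewrite -/a => h.
  have : 16 * C < a%:R * e by rewrite -ltr_pdivrMr.
  lra.
have [t [ht hg]] := @fw_exists _ _ _ _ _ _ _ _ _ Hf Hlo HX Hgam Dl HDl i x w eta z0 a e
   he hle Hz0 HD (ltn0Sn _) e0 ha2.
split.
  by exists t; rewrite cg_gapE.
move=> T [_ HT].
have hT : (T <= t)%N.
  rewrite leqNgt; apply/negP => hlt.
  have := HT t hlt; rewrite cg_gapE; lra.
have : ((T.+1)%:R : R) <= 2 * a%:R.
  rewrite -natrM ler_nat; lia.
have -> : 32 * C / e = 2 * (16 * C / e) by ring.
lra.
Qed.
Section Spec.
Variable R : realType.

Lemma le_sum_term (I : finType) (F : I -> R) (i : I) : (forall j, 0 <= F j) -> F i <= \sum_j F j.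
Proof.
move=> h; rewrite (bigD1 i) //= lerDl; by apply: sumr_ge0 => j _.
Qed.

Lemma col_mulmx {m n p : nat} (L : 'M[R]_(m, n)) (A : 'M[R]_(n, p)) j :
  col j (L *m A) = L *m col j A.
Proof. apply/matrixP => i k; rewrite !mxE; apply: eq_bigr => k' _; by rewrite !mxE. Qed.

Lemma sqnorm_eq0 {p q : nat} (A : 'M[R]_(p, q)) : sqnorm A = 0 -> A = 0.
Proof.
move=> h; apply/matrixP => i j; rewrite mxE.
have h1 : A i j ^+ 2 <= 0.
  rewrite -h /sqnorm.
  have h2 := @le_sum_term _ (fun j => A i j ^+ 2) j (fun k => sqr_ge0 _).
  have h3 := @le_sum_term _ (fun i => \sum_j A i j ^+ 2) i (fun k => sumr_ge0 _ (fun k' _ => sqr_ge0 _)).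
  exact: le_trans h2 h3.
have : A i j ^+ 2 = 0 by apply/eqP; rewrite eq_le h1 sqr_ge0.
by move/eqP; rewrite sqrf_eq0 => /eqP.
Qed.

Definition unitset {m : nat} (L : 'M[R]_m) :=
  [set enorm (L *m v) | v in [set v : 'cV[R]_m | enorm v = 1]].

Lemma unitset_ub {m : nat} (L : 'M[R]_m) : has_ubound (unitset L).
Proof.
set B := \sum_i (\sum_k `|L i k|) ^+ 2.
exists (Num.sqrt B) => y [v /= hv <-].
rewrite /enorm ler_sqrt; last by apply: sumr_ge0 => i _; apply: sqr_ge0.
have hv1 : sqnorm v = 1.
  have := sqr_sqrtr (sqnorm_ge0 v); rewrite -/(enorm v) hv expr1n => <- //.
have hvk : forall k, `|v k 0| <= 1.
  move=> k.
  have : v k 0 ^+ 2 <= 1.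
    rewrite -hv1 /sqnorm.
    have h2 := @le_sum_term _ (fun j => v k j ^+ 2) 0 (fun k => sqr_ge0 _).
    have h3 := @le_sum_term _ (fun i => \sum_j v i j ^+ 2) k (fun k => sumr_ge0 _ (fun k' _ => sqr_ge0 _)).
    exact: le_trans h2 h3.
  rewrite expr2 => h.
  by rewrite ler_norml; apply/andP; split; nra.
rewrite /sqnorm /B; apply: ler_sum => i _; rewrite big_ord1.
have hi : `|(L *m v) i 0| <= \sum_k `|L i k|.
  rewrite mxE; apply: le_trans (ler_norm_sum _ _ _) _.
  apply: ler_sum => k _; rewrite normrM.
  rewrite -{2}[`|L i k|]mulr1; apply: ler_wpM2l => //.
rewrite -[(L *m v) i 0 ^+ 2]real_normK ?num_real //.
rewrite !expr2; apply: ler_pM => //.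
Qed.

End Spec.
Section Spec2.
Variable R : realType.

Lemma sqnorm_enorm {p q : nat} (A : 'M[R]_(p,q)) : sqnorm A = enorm A ^+ 2.
Proof. by rewrite /enorm sqr_sqrtr // sqnorm_ge0. Qed.

Lemma enorm_ge0 {p q : nat} (A : 'M[R]_(p,q)) : 0 <= enorm A.
Proof. by apply: sqrtr_ge0. Qed.

Lemma spec_col {m : nat} (L : 'M[R]_m) (v : 'cV[R]_m) :
  sqnorm (L *m v) <= specnorm L ^+ 2 * sqnorm v.
Proof.
have [h0|hpos] := eqVneq (sqnorm v) 0.
  by rewrite h0 mulr0 (sqnorm_eq0 h0) mulmx0 sqnormE ip0r.
set s := enorm v.
have s0 : 0 < s.
  rewrite lt_neqAle enorm_ge0 andbT eq_sym /s /enorm sqrtr_eq0 -ltNge.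
  by rewrite lt_neqAle eq_sym hpos sqnorm_ge0.
set u := s^-1 *: v.
have hu : enorm u = 1.
  rewrite /enorm sqnormZ sqnorm_enorm -/s exprVn mulVf ?sqrtr1 //.
  by rewrite expf_neq0 // gt_eqF.
have hS : unitset L (enorm (L *m u)) by exists u.
have hsup : has_sup (unitset L) by split; [exists (enorm (L *m u)) | apply: unitset_ub].
have hle := sup_upper_bound hsup hS.
rewrite -/(specnorm L) in hle.
have e1 : L *m u = s^-1 *: (L *m v) by rewrite scalemxAr.
have : sqnorm (L *m u) <= specnorm L ^+ 2.
  rewrite sqnorm_enorm !expr2; apply: ler_pM => //; apply: enorm_ge0.
rewrite e1 sqnormZ sqnorm_enorm -/s => h.
rewrite sqnorm_enorm -/s.
have hs2 : 0 < s ^+ 2 by apply: exprn_gt0.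
rewrite exprVn in h.
by rewrite -ler_pdivrMr // mulrC.
Qed.

Lemma spec_mat {m q : nat} (L : 'M[R]_m) (A : 'M[R]_(m, q)) :
  sqnorm (L *m A) <= specnorm L ^+ 2 * sqnorm A.
Proof.
rewrite !(sqnorm_cols) mulr_sumr; apply: ler_sum => j _.
by rewrite col_mulmx; apply: spec_col.
Qed.

End Spec2.
Section Lap.
Variable R : realType.

Lemma lap_sym {m : nat} (E : rel 'I_m) : (forall i j, E i j = E j i) ->
  (laplacian R E)^T = laplacian R E.
Proof.
move=> hE; apply/matrixP => i j; rewrite !mxE.
have [->|hij] := eqVneq j i; first by [].
by rewrite hE.
Qed.

Lemma spec_ge1 {m : nat} (E : rel 'I_m) : (1 < m)%N -> connected_graph E ->
  1 <= specnorm (laplacian R E).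
Proof.
move=> hm [hirr [hsym hcon]].
have h0 : (0 < m)%N by apply: ltn_trans hm.
set i0 := Ordinal h0.
set i1 := Ordinal hm.
have hdeg : (0 < #|[set k | E i0 k]|)%N.
  apply/card_gt0P.
  have /connectP [p hp hl] := hcon i0 i1.
  case: p hp hl => [|k p] /=.
    by move=> _ /(congr1 val).
  move=> /andP [hk _] _; exists k; by rewrite inE.
set L := laplacian R E.
set u : 'cV[R]_m := \col_k ((k == i0)%:R).
have hu2 : sqnorm u = 1.
  rewrite /sqnorm (bigD1 i0) //= big_ord1 !mxE eqxx expr1n big1 ?addr0 //.
  by move=> k hk; rewrite big_ord1 !mxE (negbTE hk) expr0n.
have hu : enorm u = 1 by rewrite /enorm hu2 sqrtr1.
have hLu : (L *m u) i0 0 = (#|[set k | E i0 k]|)%:R.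
  rewrite mxE (bigD1 i0) //= big1 ?addr0.
    by rewrite !mxE !eqxx mulr1.
  by move=> k hk; rewrite !mxE (negbTE hk) mulr0.
have hS : unitset L (enorm (L *m u)) by exists u.
have hsup : has_sup (unitset L) by split; [exists (enorm (L *m u)) | apply: unitset_ub].
have hle := sup_upper_bound hsup hS.
apply: le_trans hle.
rewrite /enorm -sqrtr1 ler_sqrt; last by apply: sqnorm_ge0.
have h1 : 1 <= (L *m u) i0 0 ^+ 2.
  rewrite hLu -natrX ler1n; by rewrite expn_gt0 hdeg.
apply: le_trans h1 _.
rewrite /sqnorm.
have h2 := @le_sum_term _ _ (fun j => (L *m u) i0 j ^+ 2) 0 (fun k => sqr_ge0 _).
have h3 := @le_sum_term _ _ (fun i => \sum_j (L *m u) i j ^+ 2) i0 (fun k => sumr_ge0 _ (fun k' _ => sqr_ge0 _)).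
exact: le_trans h2 h3.
Qed.

End Lap.
Section Tele.
Variables (R : realType) (m d : nat) (L : 'M[R]_m) (lam : R).
Hypothesis hlam : 0 < lam.
Hypothesis hL : L^T = L.
Hypothesis hop : forall A : 'M[R]_(m, d), sqnorm (L *m A) <= lam ^+ 2 * sqnorm A.

Lemma sqnorm0 {p q : nat} : sqnorm (0 : 'M[R]_(p, q)) = 0.
Proof. by rewrite sqnormE ip0r. Qed.

Lemma cross_bound (y D : 'M[R]_(m, d)) : 2 * ip y (L *m D) <= lam * sqnorm y + lam * sqnorm D.
Proof.
apply: le_trans (ip_young y (L *m D) hlam) _.
rewrite lerD2l.
apply: le_trans (_ : lam^-1 * (lam ^+ 2 * sqnorm D) <= _).
  by apply: ler_wpM2l; [rewrite invr_ge0 ltW|].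
by rewrite mulrA expr2 mulrA mulVf ?mul1r // gt_eqF.
Qed.

Lemma telescope (Fv : 'M[R]_(m, d) -> R) (xs ys : nat -> 'M[R]_(m, d)) xstar (ee : R) (N : nat) :
  L *m xstar = 0 ->
  (forall k, (1 <= k <= N)%N ->
     ys k = ys (k - 1)%N + lam^-1 *: (L *m ((xs (k - 1)%N - xs (k - 2)%N) + xs (k - 1)%N))) ->
  (forall k, (1 <= k <= N)%N ->
     ip (L *m ys k) (xs k) + Fv (xs k) + lam * sqnorm (xs k - xs (k - 1)%N)
       + lam * sqnorm (xstar - xs k)
     <= ip (L *m ys k) xstar + Fv xstar + lam * sqnorm (xstar - xs (k - 1)%N) + ee) ->
  \sum_(1 <= k < N.+1) (Fv (xs k) - Fv xstar)
    <= lam * sqnorm (xstar - xs 0%N) + lam / 2 * sqnorm (ys 0%N) + N%:R * ee.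
Proof.
move=> hxs hy hx.
pose Phi k := lam * sqnorm (xstar - xs k) + lam / 2 * sqnorm (ys k)
   + ip (ys k) (L *m (xs k - xs (k - 1)%N)) + lam / 2 * sqnorm (xs k - xs (k - 1)%N).
have hstep : forall j, (j < N)%N -> Fv (xs j.+1) - Fv xstar <= Phi j - Phi j.+1 + ee.
  move=> j hj.
  have hyj := hy j.+1 ltac:(lia).
  have hxj := hx j.+1 ltac:(lia).
  rewrite !subSS subn0 in hyj hxj.
  rewrite /Phi subSS subn0.
  set x := xs j.+1 in hyj hxj *.
  set xp := xs j in hyj hxj *.
  set xpp := xs (j - 1)%N in hyj hxj *.
  set y := ys j.+1 in hyj hxj *.
  set yp := ys j in hyj hxj *.
  have e0 : ip (L *m y) xstar = 0 by rewrite ip_mulmx // hxs ip0r.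
  have e1 : L *m (xp - xpp + xp) = lam *: (y - yp).
    by rewrite hyj [yp + _]addrC addrK scalerA mulfV ?scale1r // gt_eqF.
  have e2 : ip (L *m y) x = lam * ip y (y - yp) - ip y (L *m (xp - xpp)) + ip y (L *m (x - xp)).
    have hxx : L *m x = L *m (xp - xpp + xp) - L *m (xp - xpp) + L *m (x - xp).
      by rewrite -mulmxBr -mulmxDr [xp - xpp + xp]addrC addrK [xp + _]addrC subrK.
    by rewrite ip_mulmx // hxx e1 [ip y (_ + L *m (x - xp))]ipDr [ip y (lam *: _ - _)]ipBr [ip y (lam *: _)]ipZr.
  have e3 : 2 * ip y (y - yp) = sqnorm y - sqnorm yp + sqnorm (y - yp).
    rewrite sqnormB ipBr sqnormE; ring.
  have e4 : ip y (L *m (xp - xpp)) = ip yp (L *m (xp - xpp)) + ip (y - yp) (L *m (xp - xpp)).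
    by rewrite ipBl; ring.
  have c1 := cross_bound (y - yp) (xp - xpp).
  have c2 : 0 <= lam / 2 * sqnorm (x - xp).
    by apply: mulr_ge0; [apply: divr_ge0; [apply: ltW|]|apply: sqnorm_ge0].
  have e5 : lam * ip y (y - yp) = lam / 2 * (2 * ip y (y - yp)) by field.
  rewrite e3 in e5.
  lra.
have hind : forall n, (n <= N)%N ->
   \sum_(1 <= k < n.+1) (Fv (xs k) - Fv xstar) <= Phi 0%N - Phi n + n%:R * ee.
  elim=> [|n IH] hn.
    by rewrite big_geq // subrr mul0r addr0.
  rewrite big_nat_recr //=.
  have := IH (ltnW hn).
  have := hstep n hn.
  rewrite -natr1.
  lra.
have hN := hind N (leqnn N).
have hPhiN : 0 <= Phi N.
  rewrite /Phi.
  have c := cross_bound (- ys N) (xs N - xs (N - 1)%N).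
  rewrite ipNl sqnormN in c.
  have : 0 <= lam * sqnorm (xstar - xs N).
    by apply: mulr_ge0; [apply: ltW|apply: sqnorm_ge0].
  have e6 : lam / 2 * sqnorm (ys N) = lam * sqnorm (ys N) / 2 by ring.
  have e7 : lam / 2 * sqnorm (xs N - xs (N - 1)%N) = lam * sqnorm (xs N - xs (N - 1)%N) / 2 by ring.
  lra.
have hPhi0 : Phi 0%N = lam * sqnorm (xstar - xs 0%N) + lam / 2 * sqnorm (ys 0%N).
  by rewrite /Phi sub0n subrr mulmx0 ip0r sqnorm0 mulr0 !addr0.
lra.
Qed.

End Tele.
Section Misc.
Variable R : realType.

Lemma rowB {p q : nat} (A B : 'M[R]_(p, q)) i : row i (A - B) = row i A - row i B.
Proof. by apply/rowP => j; rewrite !mxE. Qed.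

Lemma sqnorm_rowsB {p q : nat} (A B : 'M[R]_(p, q)) :
  sqnorm (A - B) = \sum_i sqnorm (row i A - row i B).
Proof. by rewrite sqnorm_rows; apply: eq_bigr => i _; rewrite rowB. Qed.

Lemma compact_diam {d : nat} (X : set 'rV[R]_d) : compact_set X ->
  exists Dl : R, 0 <= Dl /\ forall a b, X a -> X b -> sqnorm (a - b) <= Dl.
Proof.
move=> hc.
have [M [_ HM]] := compact_bounded hc.
set B := `|M| + 1.
have hB : forall x : 'rV[R]_d, X x -> forall i j, `|x i j| <= B.
  move=> x Xx i j.
  have h := HM B ltac:(rewrite /B; apply: (le_lt_trans (ler_norm M)); lra) x Xx.
  apply: le_trans h.
  change (`|x i j| <= mx_norm x); rewrite mx_normrE.
  exact: (le_bigmax _ (fun ij : 'I_1 * 'I_d => `|x ij.1 ij.2|) (i, j)).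
exists (\sum_(i < 1) \sum_(j < d) (2 * B) ^+ 2); split.
  by apply: sumr_ge0 => i _; apply: sumr_ge0 => j _; apply: sqr_ge0.
move=> a b Xa Xb; apply: ler_sum => i _; apply: ler_sum => j _.
have ha := hB a Xa i j; have hb := hB b Xb i j.
rewrite !mxE.
move: ha hb; rewrite !ler_norml => /andP [ha1 ha2] /andP [hb1 hb2].
have h1 : 0 <= 2 * B - (a i j - b i j) by lra.
have h2 : 0 <= 2 * B + (a i j - b i j) by lra.
have := mulr_ge0 h1 h2.
rewrite !expr2; nra.
Qed.

End Misc.
Section Prox.
Variables (R : realType) (m d : nat) (X : set 'rV[R]_d)
  (f : 'I_m -> 'rV[R]_d -> R) (gf : 'I_m -> 'rV[R]_d -> 'rV[R]_d) (l : R)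
  (lo : 'rV[R]_d -> 'rV[R]_d).
Hypothesis Hf : forall i, strcvx_smooth 0 l (f i) (gf i).
Hypothesis Hlo : linear_oracle X lo.

Lemma inexact_prox i x w (eta e : R) (zT z : 'rV[R]_d) : X z ->
  ip (cg_grad (gf i) x w eta zT) (zT - lo (cg_grad (gf i) x w eta zT)) <= e ->
  ip w zT + f i zT + eta / 2 * sqnorm (zT - x) + eta / 2 * sqnorm (z - zT)
  <= ip w z + f i z + eta / 2 * sqnorm (z - x) + e.
Proof.
move=> Xz hg.
set g := cg_grad (gf i) x w eta zT in hg.
have [_ hl] := Hlo g.
have hl' := hl z Xz; rewrite !dotvE in hl'.
have hc := @f_cvx _ _ _ _ _ _ Hf i zT z.
have hq : z - x = (zT - x) + (z - zT) by rewrite [RHS]addrC addrA subrK.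
rewrite hq [sqnorm (zT - x + _)]sqnormD.
have hgi := @grad_ip _ _ _ gf i x w eta zT (z - zT).
rewrite -/g in hgi.
rewrite !ipBr in hg.
have : ip g (z - zT) = ip g z - ip g zT by rewrite ipBr.
have : ip w (z - zT) = ip w z - ip w zT by rewrite ipBr.
lra.
Qed.

Lemma prox_sum (W Xp Xk Z : 'M[R]_(m, d)) (eta e : R) :
  inXm X Z ->
  (forall i, ip (cg_grad (gf i) (row i Xp) (row i W) eta (row i Xk))
              (row i Xk - lo (cg_grad (gf i) (row i Xp) (row i W) eta (row i Xk))) <= e) ->
  ip W Xk + Fobj f Xk + eta / 2 * sqnorm (Xk - Xp) + eta / 2 * sqnorm (Z - Xk)
  <= ip W Z + Fobj f Z + eta / 2 * sqnorm (Z - Xp) + m%:R * e.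
Proof.
move=> HZ hg.
have S : \sum_i (ip (row i W) (row i Xk) + f i (row i Xk) + eta / 2 * sqnorm (row i Xk - row i Xp)
      + eta / 2 * sqnorm (row i Z - row i Xk))
   <= \sum_i (ip (row i W) (row i Z) + f i (row i Z) + eta / 2 * sqnorm (row i Z - row i Xp) + e).
  by apply: ler_sum => i _; apply: inexact_prox.
rewrite !big_split /= -!mulr_sumr in S.
rewrite sumr_const card_ord -mulr_natl in S.
rewrite (ip_rows W Xk) (ip_rows W Z) /Fobj.
rewrite (sqnorm_rowsB Xk Xp) (sqnorm_rowsB Z Xk) (sqnorm_rowsB Z Xp).
lra.
Qed.

Lemma jensen (xs : nat -> 'M[R]_(m, d)) (N : nat) : (1 <= N)%N ->
  N%:R * Fobj f (dcgs_output (fun _ => 1) N xs) <= \sum_(1 <= k < N.+1) Fobj f (xs k).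
Proof.
move=> hN.
set xb := dcgs_output (fun _ => 1) N xs.
set G : 'M[R]_(m, d) := \matrix_(i, j) (gf i (row i xb)) 0 j.
have hrowG : forall i, row i G = gf i (row i xb) by move=> i; apply/rowP => j; rewrite !mxE.
have hF : forall A, Fobj f xb + ip G (A - xb) <= Fobj f A.
  move=> A; rewrite /Fobj ip_rows -big_split /=; apply: ler_sum => i _.
  by rewrite hrowG rowB; apply: (@f_cvx _ _ _ _ _ _ Hf).
have S : \sum_(1 <= k < N.+1) (Fobj f xb + ip G (xs k - xb)) <= \sum_(1 <= k < N.+1) Fobj f (xs k).
  by apply: ler_sum => k _; apply: hF.
rewrite big_split /= -ip_sumr sumrB sumr_const_nat subSS subn0 in S.
have hxb : (\sum_(1 <= i < N.+1) xs i) - xb *+ N = 0.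
  rewrite /xb /dcgs_output.
  have -> : \sum_(1 <= k < N.+1) (1 : R) = N%:R by rewrite sumr_const_nat subSS subn0.
  have -> : \sum_(1 <= k < N.+1) (1 : R) *: xs k = \sum_(1 <= k < N.+1) xs k.
    by apply: eq_bigr => k _; rewrite scale1r.
  rewrite -scaler_nat scalerA mulfV ?scale1r ?subrr //.
  by rewrite pnatr_eq0 -lt0n.
rewrite sumr_const_nat subSS subn0 hxb ip0r addr0 in S.
by rewrite mulr_natl.
Qed.

End Prox.
Lemma final_arith (R : realType) (mm N nL l D Dl eps : R) :
  1 <= mm -> 0 <= l -> 1 <= nL -> 0 < D -> 0 <= Dl -> 0 < eps -> eps <= nL ->
  0 < N -> N <= 7 / 2 * (nL * D / eps) ->
  N * (32 * ((l + 2 * nL) / 2 * Dl) / (nL * D / (mm * N)) + 2)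
   <= (392 * Dl + 7) * (mm * nL * (l + nL) * D / eps ^+ 2).
Proof.
move=> hm hl hn hD hDl he hen hN hNK.
set K := nL * D / eps.
have hK : 0 < K by apply: divr_gt0 => //; apply: mulr_gt0 => //; lra.
set A := mm * K / eps.
have hA : 0 <= A by apply: divr_ge0; [apply: mulr_ge0; lra|lra].
have hnD : nL * D != 0 by rewrite gt_eqF //; apply: mulr_gt0 => //; lra.
have hmN : mm * N != 0 by rewrite gt_eqF //; apply: mulr_gt0 => //; lra.
have he0 : eps != 0 by rewrite gt_eqF.
have hN0 : N != 0 by rewrite gt_eqF.
have hmm0 : mm != 0 by rewrite gt_eqF //; lra.
have hnl0 : nL != 0 by rewrite gt_eqF //; lra.
have hD0 : D != 0 by rewrite gt_eqF.
set P := mm * N ^+ 2 / (nL * D).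
have eL : N * (32 * ((l + 2 * nL) / 2 * Dl) / (nL * D / (mm * N)) + 2)
   = 16 * ((l + 2 * nL) * Dl) * P + 2 * N.
  by rewrite /P; field; rewrite hD0 hnl0 hN0 hmm0.
have eR : mm * nL * (l + nL) * D / eps ^+ 2 = (l + nL) * A.
  by rewrite /A /K; field.
rewrite eL eR.
have hP : P <= 49 / 4 * A.
  have eA : 49 / 4 * A = mm * (7 / 2 * K) ^+ 2 / (nL * D).
    by rewrite /A /K; field; rewrite ?hnD ?he0 ?hD0 ?hnl0 ?hN0 ?hmm0.
  rewrite eA /P ler_pM2r; last by rewrite invr_gt0; apply: mulr_gt0; lra.
  apply: ler_wpM2l; first lra.
  by rewrite !expr2; apply: ler_pM => //; lra.
have h1 : 16 * ((l + 2 * nL) * Dl) * P <= 16 * ((l + 2 * nL) * Dl) * (49 / 4 * A).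
  apply: ler_wpM2l => //; apply: mulr_ge0; [lra|apply: mulr_ge0 => //; lra].
have h2 : (l + 2 * nL) * Dl * A <= 2 * ((l + nL) * Dl * A).
  have : 0 <= l * Dl * A by apply: mulr_ge0 => //; apply: mulr_ge0.
  lra.
have h3 : K <= (l + nL) * A.
  have e : (l + nL) * A = ((l + nL) * mm / eps) * K by rewrite /A; field.
  have h : 1 <= (l + nL) * mm / eps by rewrite ler_pdivlMr // mul1r; nra.
  rewrite e -[K in K <= _]mul1r.
  by rewrite ler_pM2r.
have h4 : 2 * N <= 7 * K by rewrite /K; lra.
nra.
Qed.
Lemma sqnorm_q0 (R : realType) (p q : nat) (A : 'M[R]_(p, q)) : q = 0%N -> sqnorm A = 0.
Proof.
move=> hq; apply: big1 => i _; apply: big1 => [[j hj]] _.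
by exfalso; rewrite hq in hj.
Qed.

Theorem corollary1 (R : realType) :
  exists C1 : R, 0 < C1 /\
  forall (d : nat) (X : set 'rV[R]_d),
    (exists x, X x) -> convex_set X -> compact_set X ->
  exists C2 : R, 0 < C2 /\
  forall (m : nat) (E : rel 'I_m) (f : 'I_m -> 'rV[R]_d -> R)
         (gf : 'I_m -> 'rV[R]_d -> 'rV[R]_d) (l : R)
         (lo : 'rV[R]_d -> 'rV[R]_d) (x0 y0 xstar : 'M[R]_(m, d)),
    (1 < m)%N ->
    connected_graph E ->
    (forall i, strcvx_smooth 0 l (f i) (gf i)) ->
    linear_oracle X lo ->
    inXm X x0 ->
    optimal_sol X (laplacian R E) f xstar ->
    let nL := specnorm (laplacian R E) in
    let D := Num.max (sqnorm (x0 - xstar)) (sqnorm y0) in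
    0 < D ->
  exists eps0 : R, 0 < eps0 /\
  forall eps : R, 0 < eps <= eps0 ->
  exists N : nat, (1 <= N)%N /\
    (2 * N)%:R <= C1 * (nL * D / eps) /\
    forall (zinit : nat -> 'I_m -> 'rV[R]_d) (gam : step_rule R m d),
      (forall k i, X (zinit k i)) ->
      admissible_step f gam ->
      let runP := dcgs_run (laplacian R E) gf lo gam zinit
                    (fun _ => 1) (fun _ => nL) (fun _ => 2 * nL)
                    (fun _ _ => nL * D / (m%:R * N%:R)) N x0 y0 in
      (exists xs ys T, runP xs ys T) /\
      forall xs ys T, runP xs ys T ->
        (forall i, (lo_calls T N i)%:R
                   <= C2 * (m%:R * nL * (l + nL) * D / eps ^+ 2)) /\
        Fobj f (dcgs_output (fun _ => 1) N xs) - Fobj f xstar <= eps.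
Proof.
exists 7; split; first by [].
move=> d X _ HX hc.
have [Dl [hDl HDl]] := compact_diam hc.
exists (392 * Dl + 7); split; first lra.
move=> m E f gf l lo x0 y0 xstar hm hE Hf Hlo Hx0 Hopt nL D hD.
set L := laplacian R E.
have hL : L^T = L := @lap_sym R m E hE.2.1.
have hlam1 : 1 <= nL := @spec_ge1 R m E hm hE.
have hlam : 0 < nL by lra.
have hop : forall A : 'M[R]_(m, d), sqnorm (L *m A) <= nL ^+ 2 * sqnorm A.
  by move=> A; apply: spec_mat.
have hm0 : (0 < m)%N by apply: ltn_trans hm.
have hd : (0 < d)%N.
  rewrite lt0n; apply/negP => /eqP hd0.
  move: hD; rewrite /D (sqnorm_q0 _ hd0) (sqnorm_q0 _ hd0).
  by rewrite maxxx ltxx.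
have hl : 0 <= l.
  set i0 : 'I_m := Ordinal hm0.
  set y : 'rV[R]_d := const_mx 1.
  have /andP [_ h] := Hf i0 0 y.
  have h1 : 1 <= sqnorm (y - 0).
    rewrite subr0 /sqnorm.
    have h2 := @le_sum_term _ _ (fun j => y 0 j ^+ 2) (Ordinal hd) (fun k => sqr_ge0 _).
    have h3 := @le_sum_term _ _ (fun i => \sum_j y i j ^+ 2) 0 (fun k => sumr_ge0 _ (fun k' _ => sqr_ge0 _)).
    have := le_trans h2 h3; by rewrite /= mxE expr1n.
  have h0 : 0 <= f i0 y - f i0 0 - dotv (gf i0 0) (y - 0).
    have /andP [h4 _] := Hf i0 0 y; by rewrite !mul0r in h4.
  nra.
set eps0 := Num.min (nL * D) nL.
exists eps0; split.
  by rewrite lt_min hlam andbT; apply: mulr_gt0.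
move=> eps /andP [he0 heps].
move: heps; rewrite le_min => /andP [heps1 heps2].
set K := nL * D / eps.
have hK1 : 1 <= K by rewrite /K ler_pdivlMr // mul1r.
set N := (Num.trunc (5 * K / 2)).+1.
have hNlo : 5 * K / 2 < N%:R by apply: truncnS_gt.
have hNhi : (N%:R : R) <= 5 * K / 2 + 1.
  rewrite /N -natr1; have := truncn_le (5 * K / 2).
  have -> : 0 <= 5 * K / 2 by apply: divr_ge0 => //; lra.
  move=> h; lra.
have hN1 : (1 <= N)%N by [].
have hN0 : (0 : R) < N%:R by rewrite ltr0n.
exists N; split; first by [].
split.
  by rewrite natrM; lra.
move=> zinit gam Hz Hgam runP.
set ee := nL * D / (m%:R * N%:R).
have hm0R : (0 : R) < m%:R by rewrite ltr0n.
have hee : 0 < ee.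
  by apply: divr_gt0; [apply: mulr_gt0 => //; lra | apply: mulr_gt0].
have heta : 0 <= 2 * nL by lra.
have hleta : 0 <= l + 2 * nL by lra.
have Hcg := fun i x w z0 Xz0 =>
  @cg_T_bound R m d X f gf l lo gam Hf Hlo HX Hgam Dl HDl i x w (2 * nL) ee z0 heta hleta Xz0 hDl hee.
split.
  have Hex : forall k i x w, exists t, cg_gap i (gf i) lo gam x w (2 * nL) (zinit k i) t <= ee.
    by move=> k i x w; have [h _] := Hcg i x w (zinit k i) (Hz k i).
  pose Tsel k i x w := ex_minn (Hex k i x w).
  pose step (k : nat) (st : 'M[R]_(m, d) * 'M[R]_(m, d) * 'M[R]_(m, d)) :
      'M[R]_(m, d) * 'M[R]_(m, d) * 'M[R]_(m, d) :=
    let xp := st.1.1 in let xpp := st.1.2 in let yp := st.2 in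
    let y := yp + nL^-1 *: (L *m (1 *: (xp - xpp) + xp)) in
    let w := L *m y in
    (\matrix_(i, j) (cg_seq i (gf i) lo gam (row i xp) (row i w) (2 * nL) (zinit k i)
        (Tsel k i (row i xp) (row i w))) 0 j, xp, y).
  pose st := fix st (k : nat) : 'M[R]_(m, d) * 'M[R]_(m, d) * 'M[R]_(m, d) :=
    match k with 0%N => (x0, x0, y0) | k'.+1 => step k'.+1 (st k') end.
  pose xs k := (st k).1.1.
  pose ys k := (st k).2.
  pose T k i := Tsel k i (row i (xs (k - 1)%N)) (row i (L *m ys k)).
  exists xs, ys, T.
  have hst2 : forall k, (st k).1.2 = xs (k - 1)%N.
    by case=> [|k] //=; rewrite subSS subn0.
  split; first by [].
  split; first by [].
  move=> k /andP [hk1 hkN].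
  case: k hk1 hkN => [|k] // _ hkN.
  rewrite /= !subSS !subn0.
  split.
    by rewrite /ys /= -hst2.
  move=> i; split.
    rewrite /T /Tsel /= !subSS !subn0.
    case: ex_minnP => t ht hmin; split => // t' ht'.
    rewrite ltNge; apply/negP => h.
    by move: (hmin t' h); rewrite leqNgt ht'.
  apply/rowP => j.
  by rewrite /xs /T /= !mxE subSS subn0.
move=> xs ys T Hrun.
have [Hxs0 [Hys0 Hk]] := Hrun.
have Hk2 : forall k, (1 <= k <= N)%N ->
   ys k = ys (k - 1)%N + nL^-1 *: (L *m (xs (k - 1)%N - xs (k - 2)%N + xs (k - 1)%N)) /\
   forall i, cg_stops_at i (gf i) lo gam (row i (xs (k - 1)%N)) (row i (L *m ys k)) (2 * nL) ee
        (zinit k i) (T k i) /\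
     row i (xs k) = cg_seq i (gf i) lo gam (row i (xs (k - 1)%N)) (row i (L *m ys k)) (2 * nL)
        (zinit k i) (T k i).
  move=> k hk; have [h1 h2] := Hk k hk; split; first by rewrite h1 scale1r.
  exact: h2.
split.
  move=> i; rewrite /lo_calls natr_sum.
  have hb : forall k, (1 <= k < N.+1)%N ->
     ((T k i).+1)%:R <= 32 * ((l + 2 * nL) / 2 * Dl) / ee + 2.
    move=> k hk; have [_ hi] := Hk2 k hk; have [hs _] := hi i.
    exact: (Hcg i _ _ (zinit k i) (Hz k i)).2 _ hs.
  have := ler_sum_nat hb.
  rewrite sumr_const_nat subSS subn0 => hsum.
  apply: le_trans hsum _.
  have hm1 : (1 : R) <= m%:R by rewrite ler1n.
  have hNK : (N%:R : R) <= 7 / 2 * (nL * D / eps) by rewrite -/K; lra.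
  have FA := (final_arith hm1 hl hlam1 hD hDl he0 heps2 hN0 hNK).
  by rewrite -(mulr_natl (32 * _ / ee + 2) N) /ee.
have HY : forall k, (1 <= k <= N)%N ->
   ys k = ys (k - 1)%N + nL^-1 *: (L *m (xs (k - 1)%N - xs (k - 2)%N + xs (k - 1)%N)).
  by move=> k hk; have [] := Hk2 k hk.
have e2 : 2 * nL / 2 = nL by rewrite mulrC mulKf // pnatr_eq0.
have HXk : forall k, (1 <= k <= N)%N ->
   ip (L *m ys k) (xs k) + Fobj f (xs k) + nL * sqnorm (xs k - xs (k - 1)%N)
     + nL * sqnorm (xstar - xs k)
   <= ip (L *m ys k) xstar + Fobj f xstar + nL * sqnorm (xstar - xs (k - 1)%N) + m%:R * ee.
  move=> k hk; have [_ hi] := Hk2 k hk.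
  have hg : forall i, ip (cg_grad (gf i) (row i (xs (k - 1)%N)) (row i (L *m ys k)) (2 * nL) (row i (xs k)))
     (row i (xs k) - lo (cg_grad (gf i) (row i (xs (k - 1)%N)) (row i (L *m ys k)) (2 * nL) (row i (xs k)))) <= ee.
    move=> i; have [[hg _] hrow] := hi i.
    by rewrite hrow -dotvE.
  have := prox_sum Hf Hlo Hopt.1 hg.
  by rewrite e2.
have Tel := telescope hlam hL hop Hopt.2.1 HY HXk.
rewrite Hxs0 Hys0 in Tel.
have J := jensen Hf xs hN1.
rewrite sumrB sumr_const_nat subSS subn0 -mulr_natl in Tel.
have hb1 : nL * sqnorm (xstar - x0) <= nL * D.
  apply: ler_wpM2l; first lra.
  by rewrite sqnorm_sym /D le_max lexx.
have hb2 : nL / 2 * sqnorm y0 <= nL / 2 * D.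
  apply: ler_wpM2l; first lra.
  by rewrite /D le_max lexx orbT.
have hb3 : N%:R * (m%:R * ee) = nL * D.
  rewrite /ee; field.
  by rewrite !gt_eqF.
have hb4 : 5 / 2 * (nL * D) < N%:R * eps.
  have : 5 * K / 2 * eps < N%:R * eps by rewrite ltr_pM2r.
  have -> : 5 * K / 2 * eps = 5 / 2 * (nL * D) by rewrite /K; field; rewrite gt_eqF.
  done.
have : N%:R * (Fobj f (dcgs_output (fun=> 1) N xs) - Fobj f xstar) < N%:R * eps.
  have : N%:R * (nL / 2 * D) = N%:R * nL / 2 * D by ring.
  lra.
rewrite ltr_pM2l // => h; exact: ltW.
Qed.
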